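(* For positive integers $a,c$ let $f^a_c(x,y,z)=ax^2+c(y^2+yz+z^2)$ with $x,y,z\in\mathbb{Z}$. There exist no positive integers $a,c$ such that $f^a_c$ represents every natural number.
   Context: Natural numbers are the positive integers $1,2,3,\dots$. *)

(* Defs.v *)
From Stdlib Require Import ZArith.
Open Scope Z_scope.

Definition f (a c x y z : Z) : Z := a * x ^ 2 + c * (y ^ 2 + y * z + z ^ 2).

Definition represents (a c n : Z) : Prop :=
  exists x y z : Z, f a c x y z = n.

(* Main.v *)
Require Import Defs.
From Stdlib Require Import ZArith Lia.
Open Scope Z_scope.

Lemma Q_nonneg y z : 0 <= y ^ 2 + y * z + z ^ 2.
Proof. nia. Qed.

Lemma Q_vals y z : let Q := y ^ 2 + y * z + z ^ 2 in
  Q <> 2 /\ Q <> 5 /\ Q <> 6 /\ Q <> 8 /\ Q <> 10.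
Proof.
  simpl.
  destruct (Z_le_gt_dec (y ^ 2 + y * z + z ^ 2) 10) as [H|H]; [|lia].
  assert (H1 : (2*y+z)^2 + 3*z^2 <= 40) by nia.
  assert (H2 : 0 <= (2*y+z)^2) by nia.
  assert (Hz : -3 <= z <= 3) by nia.
  assert (Hw : -6 <= 2*y+z <= 6) by nia.
  assert (Hy : -5 <= y <= 5) by lia.
  assert (z = -3 \/ z = -2 \/ z = -1 \/ z = 0 \/ z = 1 \/ z = 2 \/ z = 3) as Ez by lia.
  assert (y = -5 \/ y = -4 \/ y = -3 \/ y = -2 \/ y = -1 \/ y = 0 \/ y = 1 \/ y = 2 \/ y = 3 \/ y = 4 \/ y = 5) as Ey by lia.
  repeat destruct Ez as [Ez|Ez]; repeat destruct Ey as [Ey|Ey]; subst; simpl; lia.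
Qed.

Lemma X_vals x : x ^ 2 <= 10 -> x ^ 2 = 0 \/ x ^ 2 = 1 \/ x ^ 2 = 4 \/ x ^ 2 = 9.
Proof.
  intro H. assert (-3 <= x <= 3) by nia.
  assert (x = -3 \/ x = -2 \/ x = -1 \/ x = 0 \/ x = 1 \/ x = 2 \/ x = 3) as E by lia.
  repeat destruct E as [E|E]; subst; simpl; lia.
Qed.

Lemma rep_info a c n : 0 < a -> 0 < c -> 0 < n <= 10 -> represents a c n ->
  exists X Q, a * X + c * Q = n /\ (X = 0 \/ X = 1 \/ X = 4 \/ X = 9) /\
   0 <= Q /\ Q <> 2 /\ Q <> 5 /\ Q <> 6 /\ Q <> 8 /\ Q <> 10.
Proof.
  intros Ha Hc Hn [x [y [z E]]]. unfold f in E.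
  pose proof (Q_nonneg y z). pose proof (Q_vals y z). simpl in *.
  exists (x ^ 2), (y ^ 2 + y * z + z ^ 2). repeat split; try tauto.
  apply X_vals. assert (0 <= x ^ 2) by nia. nia.
Qed.

Theorem theorem3p9 :
  ~ (exists a c : Z, 0 < a /\ 0 < c /\
       forall n : Z, 0 < n -> represents a c n).
Proof.
  intros [a [c [Ha [Hc H]]]].
  destruct (rep_info a c 1 Ha Hc ltac:(lia) (H 1 ltac:(lia))) as [X1 [Q1 [E1 [HX1 HQ1]]]].
  destruct (rep_info a c 2 Ha Hc ltac:(lia) (H 2 ltac:(lia))) as [X2 [Q2 [E2 [HX2 HQ2]]]].
  assert (HQ1' : Q1 = 0 \/ Q1 = 1 \/ Q1 >= 2) by lia.
  assert (Hac : a = 1 \/ c = 1).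
  { assert (c * Q1 >= Q1) by (clear -Hc HQ1; nia).
    destruct HX1 as [->|[->|[->| ->]]]; destruct HQ1' as [->|[->|Hq]]; lia. }
  assert (HQ2' : Q2 = 0 \/ Q2 = 1 \/ Q2 >= 3) by lia.
  assert (Hac2 : (a = 1 /\ c = 1) \/ (a = 1 /\ c = 2) \/ (a = 2 /\ c = 1)).
  { assert (c * Q2 >= Q2) by (clear -Hc HQ2; nia).
    destruct Hac as [-> | ->]; destruct HX2 as [->|[->|[->| ->]]]; destruct HQ2' as [->|[->|Hq]]; try lia;
    assert (c = 1 \/ c = 2) by lia; lia. }
  destruct (rep_info a c 5 Ha Hc ltac:(lia) (H 5 ltac:(lia))) as [X5 [Q5 [E5 [HX5 HQ5]]]].
  destruct (rep_info a c 6 Ha Hc ltac:(lia) (H 6 ltac:(lia))) as [X6 [Q6 [E6 [HX6 HQ6]]]].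
  destruct (rep_info a c 10 Ha Hc ltac:(lia) (H 10 ltac:(lia))) as [X10 [Q10 [E10 [HX10 HQ10]]]].
  clear E1 E2 HX1 HX2 HQ1 HQ2 HQ1' HQ2' Hac.
  destruct Hac2 as [[-> ->]|[[-> ->]|[-> ->]]].
  - destruct HX6 as [->|[->|[->| ->]]]; lia.
  - destruct HX5 as [->|[->|[->| ->]]]; lia.
  - destruct HX10 as [->|[->|[->| ->]]]; lia.
Qed.
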